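(* Let $X$ be a real Banach space. Consider: (1) $X$ is LUR. (2) $d(Q_{S_X}(x,\frac1n),Q_{S_X}(x',\frac1n))\to\|x-x'\|$ for every $x,x'\in S_X$. (3) $d(Q_{S_X}(x,\frac1n),Q_{S_X}(-x,\frac1n))\to2$ for every $x\in S_X$. Then $(1)\Rightarrow(2)\Rightarrow(3)$.
   Context: $B_X,S_X$ are the closed unit ball and unit sphere of $X$. For non-empty bounded $F$, $x\in X$, $\delta\ge0$: $r(F,x)=\sup_{y\in F}\|x-y\|$, $Q_F(x,\delta)=\{y\in F:\|x-y\|\ge r(F,x)-\delta\}$. For non-empty sets $A,B$, $d(A,B)=\inf\{\|a-b\|:a\in A,b\in B\}$. $X$ is LUR if $x_n\to x$ whenever $x\in S_X$, $(x_n)\subseteq S_X$ and $\|\frac{x_n+x}{2}\|\to1$. *)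

(* Defs.v *)
From HB Require Import structures.
From mathcomp Require Import all_boot all_order all_algebra.
From mathcomp Require Import all_classical all_reals all_analysis.
Set Implicit Arguments. Unset Strict Implicit. Unset Printing Implicit Defensive.
Import Order.TTheory GRing.Theory Num.Theory.
Import numFieldNormedType.Exports.
Local Open Scope classical_set_scope.
Local Open Scope ring_scope.

Definition unit_sphere {R : realType} {X : normedModType R} : set X :=
  [set x | `|x| = 1].

Definition rad {R : realType} {X : normedModType R} (F : set X) (x : X) : R :=
  sup [set `|x - y| | y in F].

Definition Qset {R : realType} {X : normedModType R} (F : set X) (x : X)
  (delta : R) : set X :=
  [set y | F y /\ rad F x - delta <= `|x - y|].

Definition setdist {R : realType} {X : normedModType R} (A B : set X) : R :=
  inf [set r | exists a b, A a /\ B b /\ r = `|a - b|].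

Definition LUR {R : realType} (X : normedModType R) : Prop :=
  forall (x : X) (xs : nat -> X), `|x| = 1 -> (forall n, `|xs n| = 1) ->
    (fun n => `|(2%:R^-1 : R) *: (xs n + x)|) @ \oo --> (1 : R) ->
    xs @ \oo --> x.

(* Main.v *)
Require Import Defs.
From HB Require Import structures.
From mathcomp Require Import all_boot all_order all_algebra.
From mathcomp Require Import all_classical all_reals all_analysis.
From mathcomp Require Import lra.
Import Order.TTheory GRing.Theory Num.Theory.
Import numFieldNormedType.Exports.
Local Open Scope classical_set_scope.
Local Open Scope ring_scope.

Lemma zid (V : zmodType) (a b x x' : V) : x - x' = (a + x) - (b + x') - (a - b).
Proof.
rewrite !opprD !opprK !addrA -(addrA _ (- a) b) (addrC (- a) b) addrA.
by rewrite [_ - x' + b]addrAC subrK (addrAC (a + x)) [a + x]addrC addrK.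
Qed.

Section Aux.
Variables (R : realType) (X : normedModType R).

Lemma rad_sphere (x : X) : `|x| = 1 -> Defs.rad unit_sphere x = 2.
Proof.
move=> hx; rewrite /Defs.rad.
have ub : ubound [set `|x - y| | y in (@unit_sphere R X)] 2.
  move=> r [y hy <-]; apply: le_trans (ler_normB _ _) _.
  by rewrite hx hy.
have mem : [set `|x - y| | y in (@unit_sphere R X)] 2.
  exists (- x); first by rewrite /unit_sphere /= normrN.
  by rewrite opprK -mulr2n normrMn hx.
apply/le_anti/andP; split; first by apply: ge_sup => //; exists 2.
by apply: ub_le_sup => //; exists 2.
Qed.

Lemma inv_mono (N n : nat) : (N <= n)%N -> n.+1%:R^-1 <= N.+1%:R^-1 :> R.
Proof.
move=> Nn; rewrite lef_pV2 ?posrE ?ltr0Sn // ler_nat; by [].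
Qed.

Lemma Qsub (x : X) (N n : nat) (a : X) : (N <= n)%N ->
  Qset unit_sphere x (n.+1%:R^-1) a -> Qset unit_sphere x (N.+1%:R^-1) a.
Proof.
move=> Nn [h1 h2]; split => //; apply: le_trans h2.
by rewrite lerD2l lerN2 inv_mono.
Qed.

Lemma Qmx (x : X) (d : R) : `|x| = 1 -> 0 <= d -> Qset unit_sphere x d (- x).
Proof.
move=> hx hd; split; first by rewrite /unit_sphere /= normrN.
by rewrite rad_sphere // opprK -mulr2n normrMn hx; lra.
Qed.

Lemma shrink (x : X) : LUR X -> `|x| = 1 -> forall e : R, 0 < e ->
  exists N, forall n, (N <= n)%N -> forall a,
    Qset unit_sphere x (n.+1%:R^-1) a -> `|a + x| <= e.
Proof.
move=> hL hx e he; apply: contrapT => H.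
have H' : forall N : nat, exists a, Qset unit_sphere x (N.+1%:R^-1) a /\ e < `|a + x|.
  move=> N; apply: contrapT => nH; apply: H; exists N => n Nn a Qa.
  rewrite leNgt; apply/negP => lt; apply: nH; exists a; split => //.
  exact: Qsub Nn Qa.
have [f hf] := choice H'.
have hfn : forall n, `|- f n| = 1 by move=> n; rewrite normrN; case: (hf n) => -[].
have cv : (fun n => `|(2%:R^-1 : R) *: (- f n + x)|) @ \oo --> (1 : R).
  apply/cvgrPdist_le => eps heps.
  near=> n.
  have [[_ h2] _] := hf n.
  rewrite rad_sphere // in h2.
  have h3 : `|x - f n| <= 2.
    apply: le_trans (ler_normB _ _) _; rewrite hx.
    by case: (hf n) => -[] -> _ _; lra.
  have h4 : n.+1%:R^-1 < eps by near: n; exact: (near_infty_natSinv_lt (PosNum heps)).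
  rewrite normrZ (addrC (- f n) x) [`|2%:R^-1|]ger0_norm ?invr_ge0 ?ler0n //.
  have -> : `|x + - f n| = `|x - f n| by [].
  rewrite ger0_norm; last by lra.
  have h5 : 1 - 2^-1 * `|x - f n| = 2^-1 * (2 - `|x - f n|) :> R.
    by rewrite mulrBr mulVf ?pnatr_eq0.
  rewrite h5; apply: le_trans (ltW h4).
  rewrite ler_pdivrMl ?ltr0n //.
  have t0 : 0 <= n.+1%:R^-1 :> R by rewrite invr_ge0 ler0n.
  move: h2 t0; rewrite mulrC; set t := n.+1%:R^-1; move=> h2 t0.
  lra.
have := hL x (fun n => - f n) hx hfn cv.
move=> /cvgrPdist_lt /(_ e he) hev.
have [n hn] := filter_ex hev.
case: (hf n) => _ hlt.
move: hn; rewrite opprK addrC => hn.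
by move: (lt_trans hlt hn); rewrite ltxx.
Unshelve. all: by end_near.
Qed.

End Aux.

Theorem theorem3p13 (R : realType) (X : completeNormedModType R) :
  (LUR X ->
     forall x x' : X, unit_sphere x -> unit_sphere x' ->
       (fun n : nat => setdist (Qset unit_sphere x (n.+1%:R^-1))
                               (Qset unit_sphere x' (n.+1%:R^-1)))
         @ \oo --> `|x - x'|)
  /\
  ((forall x x' : X, unit_sphere x -> unit_sphere x' ->
       (fun n : nat => setdist (Qset unit_sphere x (n.+1%:R^-1))
                               (Qset unit_sphere x' (n.+1%:R^-1)))
         @ \oo --> `|x - x'|) ->
   forall x : X, unit_sphere x ->
       (fun n : nat => setdist (Qset unit_sphere x (n.+1%:R^-1))
                               (Qset unit_sphere (- x) (n.+1%:R^-1)))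
         @ \oo --> (2 : R)).
Proof.
split.
  move=> hL x x' hx hx'.
  apply/cvgrPdist_le => eps heps.
  have he2 : 0 < eps / 2 by rewrite divr_gt0.
  have [N1 H1] := @shrink R X x hL hx _ he2.
  have [N2 H2] := @shrink R X x' hL hx' _ he2.
  exists (maxn N1 N2) => // n /= hn.
  have hn1 : (N1 <= n)%N by apply: leq_trans hn; rewrite leq_maxl.
  have hn2 : (N2 <= n)%N by apply: leq_trans hn; rewrite leq_maxr.
  set E := [set r | exists a b, Qset unit_sphere x (n.+1%:R^-1) a /\
                   Qset unit_sphere x' (n.+1%:R^-1) b /\ r = `|a - b|].
  have hpos : 0 <= n.+1%:R^-1 :> R by rewrite invr_ge0 ler0n.
  have memE : E `|x - x'|.
    exists (- x), (- x'); split; first exact: (@Qmx R X).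
    split; first exact: (@Qmx R X).
    by rewrite -opprD normrN.
  have up : setdist (Qset unit_sphere x (n.+1%:R^-1))
                    (Qset unit_sphere x' (n.+1%:R^-1)) <= `|x - x'|.
    apply: ge_inf memE; exists 0 => r [a [b [_ [_ ->]]]]; exact: normr_ge0.
  have lo : `|x - x'| - eps <= setdist (Qset unit_sphere x (n.+1%:R^-1))
                    (Qset unit_sphere x' (n.+1%:R^-1)).
    apply: lb_le_inf; first by exists `|x - x'|.
    move=> r [a [b [Qa [Qb ->]]]].
    have ha := @H1 n hn1 a Qa.
    have hb := H2 n hn2 b Qb.
    rewrite (@zid _ a b x x').
    have h1 := ler_normB ((a + x) - (b + x')) (a - b).
    have h2 := ler_normB (a + x) (b + x').
    rewrite lerBlDr; apply: le_trans h1 _; rewrite addrC lerD2l.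
    apply: le_trans h2 _; rewrite [eps]splitr; exact: lerD.
  rewrite ger0_norm ?subr_ge0 //; lra.
move=> H x hx.
have hx' : unit_sphere (- x) by rewrite /unit_sphere /= normrN.
have := H x (- x) hx hx'.
by rewrite opprK -mulr2n normrMn hx.
Qed.
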